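(* Let $\mathcal{P}=\langle P,\le\rangle$ be a finite bounded poset with $|P|\ge 2$. Then there exists $n\in\mathbb{N}$ such that $(R^+)^n(\mathcal{P})$ is a chain.
   Context: A poset is bounded if it has a least and a greatest element. The height $H$ of a finite poset is the number of elements in its largest chain. For $a\in P$, $\uparrow a=\{b:b\ge a\}$, $\downarrow a=\{b:b\le a\}$ as subposets; the standard interval rank is $R^+(a)=[H(\uparrow a)-1,\;H(\mathcal{P})-H(\downarrow a)]$. Weak order: $[x_*,x^*]\le_W[y_*,y^*]$ iff $x_*\le y_*$ and $x^*\le y^*$. The interval rank poset $R^+(\mathcal{P})$ is the set $\{R^+(a):a\in P\}$ ordered by $\ge_W$ (it is again a finite bounded poset); $(R^+)^n$ denotes the $n$-fold iteration of this construction. *)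

(* Defs.v *)
From mathcomp Require Import all_boot.
Set Implicit Arguments. Unset Strict Implicit. Unset Printing Implicit Defensive.

Record finPoset := FinPoset {
  carrier :> finType;
  ple : rel carrier;
  ple_refl : reflexive ple;
  ple_anti : antisymmetric ple;
  ple_trans : transitive ple }.

Section Defs.
Variable P : finPoset.

Definition is_chain_set (C : {set P}) : bool :=
  [forall x in C, forall y in C, ple x y || ple y x].

Definition height (A : {set P}) : nat :=
  \max_(C : {set P} | (C \subset A) && is_chain_set C) #|C|.

Definition up (a : P) : {set P} := [set b | ple a b].
Definition down (a : P) : {set P} := [set b | ple b a].

(* Standard interval rank R^+(a) = [H(up a) - 1, H(P) - H(down a)]. *)
Definition rank_plus (a : P) : nat * nat :=
  ((height (up a)).-1, height [set: P] - height (down a)).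

Definition bounded : Prop :=
  (exists bot : P, forall x : P, ple bot x) /\ (exists top : P, forall x : P, ple x top).

Definition is_chain : Prop := forall x y : P, ple x y || ple y x.

Definition RP_carrier : finType :=
  seq_sub (undup [seq rank_plus a | a <- enum P]).

(* Ordered by >=_W (reverse of the weak order). *)
Definition RP_le : rel RP_carrier :=
  fun x y => ((ssval y).1 <= (ssval x).1) && ((ssval y).2 <= (ssval x).2).

Lemma RP_le_refl : reflexive RP_le.
Proof. by move=> x; rewrite /RP_le !leqnn. Qed.

Lemma RP_le_anti : antisymmetric RP_le.
Proof.
move=> x y /andP[/andP[h1 h2] /andP[h3 h4]].
apply: val_inj; rewrite /= [ssval x]surjective_pairing [ssval y]surjective_pairing.
by apply/eqP; rewrite xpair_eqE !eqn_leq h1 h2 h3 h4.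
Qed.

Lemma RP_le_trans : transitive RP_le.
Proof.
move=> y x z /andP[h1 h2] /andP[h3 h4]; apply/andP; split.
  exact: leq_trans h3 h1.
exact: leq_trans h4 h2.
Qed.

End Defs.

Definition Rplus (P : finPoset) : finPoset :=
  @FinPoset (RP_carrier P) (@RP_le P) (@RP_le_refl P) (@RP_le_anti P) (@RP_le_trans P).

Definition Rplus_iter (n : nat) (P : finPoset) : finPoset := iter n Rplus P.

(* Main.v *)
Require Import Defs.
From mathcomp Require Import all_boot.
From mathcomp Require Import zify.
Set Implicit Arguments. Unset Strict Implicit. Unset Printing Implicit Defensive.

Definition incp (Q : finPoset) : {set Q * Q} :=
  [set p : Q * Q | ~~ ple p.1 p.2 && ~~ ple p.2 p.1].

Section S.
Variable P : finPoset.

Lemma in_up (a b : P) : (b \in up a) = ple a b.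
Proof. by rewrite /up inE. Qed.
Lemma in_down (a b : P) : (b \in down a) = ple b a.
Proof. by rewrite /down inE. Qed.

Lemma chainP (C : {set P}) :
  reflect (forall x y, x \in C -> y \in C -> ple x y || ple y x) (is_chain_set C).
Proof.
apply: (iffP forallP) => [h x y xC yC | h x].
  by move: (h x); rewrite xC => /forallP/(_ y); rewrite yC.
apply/implyP => xC; apply/forallP => y; apply/implyP => yC; exact: h.
Qed.

Lemma chain_sub (C D : {set P}) : D \subset C -> is_chain_set C -> is_chain_set D.
Proof.
move=> sDC /chainP hC; apply/chainP => x y xD yD.
by apply: hC; apply: (subsetP sDC).
Qed.

Lemma height_ge (A C : {set P}) : C \subset A -> is_chain_set C -> #|C| <= height A.
Proof.
move=> sCA hC; rewrite /height.
apply: (@leq_bigmax_cond _ (fun C : {set P} => (C \subset A) && is_chain_set C)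
          (fun C => #|C|)); by rewrite sCA hC.
Qed.

Lemma height_ex (A : {set P}) :
  exists2 C : {set P}, (C \subset A) && is_chain_set C & #|C| = height A.
Proof.
have h0 : 0 < #|(fun C : {set P} => (C \subset A) && is_chain_set C)|.
  apply/card_gt0P; exists set0; rewrite unfold_in /= sub0set /=.
  by apply/chainP => x y; rewrite inE.
have [C hC e] := eq_bigmax_cond (fun C : {set P} => #|C|) h0.
by exists C; [move: hC; rewrite unfold_in | rewrite /height e].
Qed.

Lemma height_mono (A B : {set P}) : A \subset B -> height A <= height B.
Proof.
move=> sAB; apply/bigmax_leqP => C /andP[sCA hC]; apply: height_ge => //.
exact: subset_trans sAB.
Qed.

Lemma union_chain (a : P) (K1 K2 : {set P}) :
  K1 \subset up a -> K2 \subset down a -> is_chain_set K1 -> is_chain_set K2 ->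
  #|K1| + #|K2| <= (height [set: P]).+1.
Proof.
move=> s1 s2 c1 c2.
have chU : is_chain_set (K1 :|: K2).
  apply/chainP => x y; rewrite !inE => /orP[xK|xK] /orP[yK|yK].
  - exact: (chainP _ c1).
  - move: (subsetP s1 x xK) (subsetP s2 y yK); rewrite in_up in_down => ax ya.
    by rewrite (ple_trans ya ax) orbT.
  - move: (subsetP s2 x xK) (subsetP s1 y yK); rewrite in_up in_down => xa ay.
    by rewrite (ple_trans xa ay).
  - exact: (chainP _ c2).
have hI : #|K1 :&: K2| <= 1.
  rewrite -(cards1 a); apply: subset_leq_card; apply/subsetP => x.
  rewrite !inE => /andP[x1 x2].
  move: (subsetP s1 x x1) (subsetP s2 x x2); rewrite in_up in_down => ax xa.
  by apply/eqP; apply: ple_anti; rewrite xa ax.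
have := height_ge (subsetT (K1 :|: K2)) chU.
have := cardsUI K1 K2. lia.
Qed.

Lemma l_le_u (a : P) : (height (up a)).-1 <= height [set: P] - height (down a).
Proof.
have [K1 /andP[s1 c1] e1] := height_ex (up a).
have [K2 /andP[s2 c2] e2] := height_ex (down a).
have := union_chain s1 s2 c1 c2; rewrite e1 e2. lia.
Qed.

Lemma maxchain_c (C : {set P}) (c : P) : is_chain_set C -> #|C| = height [set: P] ->
  c \in C -> (height [set: P]).+1 <= height (up c) + height (down c).
Proof.
move=> hC eC cC.
have UD : (C :&: up c) :|: (C :&: down c) = C.
  apply/setP => x; rewrite /up /down !inE.
  case xC: (x \in C) => //=; exact: (chainP _ hC).
have UI : (C :&: up c) :&: (C :&: down c) = [set c].
  apply/setP => x; rewrite /up /down !inE; apply/idP/idP.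
    by move=> /andP[/andP[xC cx] /andP[_ xc]]; apply/eqP; apply: ple_anti; rewrite xc cx.
  by move/eqP->; rewrite cC ple_refl.
have := cardsUI (C :&: up c) (C :&: down c); rewrite UD UI cards1 eC.
have := height_ge (subsetIr C (up c)) (chain_sub (subsetIl _ _) hC).
have := height_ge (subsetIr C (down c)) (chain_sub (subsetIl _ _) hC).
lia.
Qed.

Lemma key (C : {set P}) (a c : P) : is_chain_set C -> #|C| = height [set: P] ->
  c \in C -> ~~ ple a c -> ~~ ple c a ->
  (forall x, x \in C -> ple x c -> x != c -> ple x a || ple a x) ->
  height (down c) <= height (down a).
Proof.
move=> hC eC cC ac ca hmin.
set C' := C :\: up c.
have sub : C' \subset down a.
  apply/subsetP => x; rewrite /up /down !inE => /andP[ncx xC].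
  have := chainP _ hC x c xC cC; rewrite (negbTE ncx) orbF => xc.
  have xnc : x != c by apply: contraNneq ncx => ->; exact: ple_refl.
  case/orP: (hmin x xC xc xnc) => // ax.
  by rewrite (ple_trans ax xc) in ac.
have hch : is_chain_set (a |: C').
  apply/chainP => x y; rewrite !in_setU1 => /orP[/eqP->|xC'] /orP[/eqP->|yC'].
  - by rewrite ple_refl.
  - by move: (subsetP sub y yC'); rewrite in_down => ->; rewrite orbT.
  - by move: (subsetP sub x xC'); rewrite in_down => ->.
  - by apply: (chainP _ hC); [move: xC' | move: yC']; rewrite !inE => /andP[].
have aC' : a \notin C'.
  rewrite inE; apply/negP => /andP[_ aC].
  by have := chainP _ hC a c aC cC; rewrite (negbTE ac) (negbTE ca).
have sub2 : a |: C' \subset down a.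
  apply/subsetP => x; rewrite !in_setU1 => /orP[/eqP->|xC'].
    by rewrite in_down ple_refl.
  exact: (subsetP sub).
have h1 := height_ge sub2 hch; rewrite cardsU1 aC' in h1.
have [K /andP[sK cK] eK] := height_ex (down c).
have := union_chain (subsetIr C (up c)) sK (chain_sub (subsetIl _ _) hC) cK.
have := cardsID (up c) C.
rewrite -/C' eC eK in h1 *. lia.
Qed.

Lemma mem_rank (a : P) : rank_plus a \in undup [seq rank_plus b | b <- enum P].
Proof. by rewrite mem_undup map_f // mem_enum. Qed.

Definition fR (a : P) : Rplus P := SeqSub (mem_rank a).

Lemma fR_surj (x : Rplus P) : exists a, fR a = x.
Proof.
have := ssvalP x; rewrite mem_undup => /mapP[a _ ea].
by exists a; apply: val_inj; rewrite /= ea.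
Qed.

Lemma fR_mono (a b : P) : ple a b -> ple (fR a) (fR b).
Proof.
move=> ab; rewrite /= /RP_le /= /rank_plus /=.
have h1 : height (up b) <= height (up a).
  apply: height_mono; apply/subsetP => x; rewrite !in_up => bx.
  exact: ple_trans bx.
have h2 : height (down a) <= height (down b).
  apply: height_mono; apply/subsetP => x; rewrite !in_down => xa.
  exact: ple_trans ab.
apply/andP; split; lia.
Qed.

Lemma exists_pair : 0 < #|incp P| ->
  exists a c, (a, c) \in incp P /\ ple (fR c) (fR a).
Proof.
case/card_gt0P => -[x0 y0]; rewrite inE /= => /andP[nxy nyx].
have [C /andP[_ hC] eC] := height_ex [set: P].
case: (boolP [exists a, exists c, (c \in C) && ~~ ple a c && ~~ ple c a]) => [hex|hn];
  last first.
  have allC : forall z, z \in C.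
    move=> z; apply/negPn/negP => zC.
    have hch : is_chain_set (z |: C).
      have cmp : forall c, c \in C -> ple z c || ple c z.
        move=> c cC; move: hn; rewrite negb_exists => /forallP/(_ z).
        rewrite negb_exists => /forallP/(_ c); rewrite cC /= negb_and !negbK.
        by case/orP=> ->; rewrite ?orbT.
      apply/chainP => u v; rewrite !inE => /orP[/eqP->|uC] /orP[/eqP->|vC].
      - by rewrite ple_refl.
      - exact: cmp.
      - by rewrite orbC; apply: cmp.
      - exact: (chainP _ hC).
    have := height_ge (subsetT _) hch; rewrite cardsU1 zC eC. lia.
  by have := chainP _ hC x0 y0 (allC x0) (allC y0); rewrite (negbTE nxy) (negbTE nyx).
case/existsP: hex => a /existsP [c0 hc0].
case: (@arg_minnP _ c0 (fun c => (c \in C) && ~~ ple a c && ~~ ple c a) (fun c => #|down c|) hc0) => c /andP[/andP[cC ac] ca] hmin.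
exists a, c; split; first by rewrite inE /= ac ca.
have hm : forall x, x \in C -> ple x c -> x != c -> ple x a || ple a x.
  move=> x xC xc xnc; apply/negPn/negP; rewrite negb_or => /andP[xa ax].
  have := hmin x; rewrite xC xa ax => /(_ isT).
  have : down x \proper down c.
    rewrite properE; apply/andP; split.
      apply/subsetP => z; rewrite !in_down => zx; exact: ple_trans xc.
    apply/subsetPn; exists c; first by rewrite in_down ple_refl.
    rewrite in_down; apply/negP => cx; move/eqP: xnc; apply.
    by apply: ple_anti; rewrite xc cx.
  by move/proper_card => lt le; rewrite ltnNge le in lt.
have hd := key hC eC cC ac ca hm.
have hmc := maxchain_c hC eC cC.
have la := l_le_u a.
rewrite /= /RP_le /= /rank_plus /=.
apply/andP; split; lia.
Qed.

Lemma inc_dec : 0 < #|incp P| -> #|incp (Rplus P)| < #|incp P|.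
Proof.
case/exists_pair => a [c [inac hca]].
pose F := fun p : P * P => (fR p.1, fR p.2).
have sub : incp (Rplus P) \subset F @: (incp P :\ (a, c)).
  apply/subsetP => -[x y]; rewrite inE /= => /andP[nxy nyx].
  have [a' ea'] := fR_surj x; have [b' eb'] := fR_surj y.
  subst x y.
  apply/imsetP; exists (a', b') => //.
  rewrite !inE /= (contra (@fR_mono a' b') nxy) (contra (@fR_mono b' a') nyx) /= ?andbT.
  apply/negP => /eqP [e1 e2]; subst a' b'.
  by move/negP: nyx; apply.
have := subset_leq_card sub.
have := leq_imset_card F (incp P :\ (a, c)).
have := cardsD1 (a, c) (incp P); rewrite inac add1n.
by move=> -> h1 h2; rewrite ltnS; exact: leq_trans h2 h1.
Qed.

Lemma chain_inc0 : #|incp P| = 0 -> is_chain P.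
Proof.
move/eqP; rewrite cards_eq0 => /eqP h x y.
case: (boolP (ple x y || ple y x)) => // hn.
have : (x, y) \in incp P by rewrite inE /= -negb_or hn.
by rewrite h inE.
Qed.

End S.

Theorem proposition9 (P : finPoset) :
  bounded P -> 1 < #|P| -> exists n : nat, is_chain (Rplus_iter n P).
Proof.
move=> _ _.
have [k hk] : exists k, #|incp P| <= k by exists #|incp P|.
elim: k P hk => [|k IH] P hk.
  by exists 0; apply: chain_inc0; apply/eqP; rewrite -leqn0.
case: (posnP #|incp P|) => [h0 | hpos].
  by exists 0; exact: chain_inc0 h0.
have hlt := inc_dec hpos.
have h2 : #|incp (Rplus P)| <= k by have := leq_trans hlt hk; rewrite ltnS.
have [n hn] := IH (Rplus P) h2.
by exists n.+1; rewrite /Rplus_iter iterSr.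
Qed.
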